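(* There exist $n\in\mathbb{N}$, a contraction $A\in M_n$ and a diagonal matrix $\mathbf{c}=\operatorname{diag}(c_1,\dots,c_n)$ such that $$\overline{W_{\mathbf{c}}(A)}\subsetneq\bigcap\left\{\overline{W_{\mathbf{c}\oplus \mathbf{0}}(U)}: U \text{ is a unitary dilation of } A\right\},$$ i.e. the intersection of the closures of the $\mathbf{c}\oplus\mathbf{0}$-numerical ranges of all unitary dilations of $A$ contains $\overline{W_{\mathbf{c}}(A)}$ as a proper subset.
   Context: For $A\in M_n$ and $\mathbf{c}=\operatorname{diag}(c_1,\dots,c_n)$, $W_{\mathbf{c}}(A)=\{\sum_{j=1}^n c_j\langle Ae_j,e_j\rangle: \{e_j\}_{j=1}^n \text{ an orthonormal basis of } \mathbb{C}^n\}$. A unitary dilation of $A$ is a unitary operator $U$ on a Hilbert space $\mathcal{K}\supseteq\mathbb{C}^n$ with $P_{\mathbb{C}^n}U|_{\mathbb{C}^n}=A$; $\mathbf{c}\oplus\mathbf{0}$ is the diagonal operator $\operatorname{diag}(c_1,\dots,c_n,0,0,\dots)$ on $\mathcal{K}$, and $W_{\mathbf{c}\oplus\mathbf{0}}(U)=\{\sum_{j=1}^n c_j\langle Ue_j,e_j\rangle: \{e_j\}_{j=1}^n \text{ an orthonormal set in } \mathcal{K}\}$. *)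

(* Defs.v *)
From HB Require Import structures.
From mathcomp Require Import all_boot all_order all_algebra.
From mathcomp Require Import complex reals.
Set Implicit Arguments. Unset Strict Implicit. Unset Printing Implicit Defensive.
Import Order.TTheory GRing.Theory Num.Theory.
Local Open Scope ring_scope.

Section Defs.
Variable R : realType.
Local Notation C := R[i].

Definition is_inner (K : lmodType C) (ip : K -> K -> C) : Prop :=
  [/\ forall (a : C) (x y z : K), ip (a *: x + y) z = a * ip x z + ip y z,
      forall x y, ip x y = (ip y x)^*,
      forall x, 0 <= ip x x &
      forall x, ip x x = 0 -> x = 0].

(* completeness w.r.t. the norm ||x|| = sqrt <x,x> (stated with squared norms) *)
Definition is_complete (K : lmodType C) (ip : K -> K -> C) : Prop :=
  forall u : nat -> K,
    (forall eps : C, 0 < eps -> exists N : nat, forall m k : nat,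
        (N <= m)%N -> (N <= k)%N -> ip (u m - u k) (u m - u k) < eps) ->
    exists l : K, forall eps : C, 0 < eps -> exists N : nat, forall m : nat,
        (N <= m)%N -> ip (u m - l) (u m - l) < eps.

Definition is_hilbert (K : lmodType C) (ip : K -> K -> C) : Prop :=
  is_inner ip /\ is_complete ip.

Definition orthonormal (K : lmodType C) (ip : K -> K -> C) (n : nat)
  (f : 'I_n -> K) : Prop :=
  forall i j : 'I_n, ip (f i) (f j) = (i == j)%:R.

Definition Wc (K : lmodType C) (ip : K -> K -> C) (n : nat) (c : 'I_n -> C)
  (T : K -> K) : C -> Prop :=
  fun z => exists f : 'I_n -> K, orthonormal ip f /\
             z = \sum_(j < n) c j * ip (T (f j)) (f j).

Definition cclosure (S : C -> Prop) (z : C) : Prop :=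
  forall eps : C, 0 < eps -> exists w, S w /\ `|z - w| < eps.

Definition dotc (n : nat) (x y : 'cV[C]_n) : C :=
  \sum_(i < n) x i 0 * (y i 0)^*.

Definition contraction (n : nat) (A : 'M[C]_n) : Prop :=
  forall x : 'cV[C]_n, dotc (A *m x) (A *m x) <= dotc x x.

Definition unitary (K : lmodType C) (ip : K -> K -> C) (U : K -> K) : Prop :=
  [/\ forall (a : C) (x y : K), U (a *: x + y) = a *: U x + U y,
      forall x y, ip (U x) (U y) = ip x y &
      forall y, exists x, U x = y].

(* U on K is a unitary dilation of A, where C^n sits in K via the
   orthonormal images v of the standard basis: P_{C^n} U |_{C^n} = A *)
Definition unitary_dilation (K : lmodType C) (ip : K -> K -> C) (n : nat)
  (v : 'I_n -> K) (U : K -> K) (A : 'M[C]_n) : Prop :=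
  [/\ orthonormal ip v, unitary ip U &
      forall i j : 'I_n, ip (U (v j)) (v i) = A i j].

Definition dilation_inter (n : nat) (A : 'M[C]_n) (c : 'I_n -> C) (z : C) : Prop :=
  forall (K : lmodType C) (ip : K -> K -> C) (v : 'I_n -> K) (U : K -> K),
    is_hilbert ip -> unitary_dilation ip v U A -> cclosure (Wc ip c U) z.

Definition Wc_mx (n : nat) (A : 'M[C]_n) (c : 'I_n -> C) : C -> Prop :=
  Wc (@dotc n) c (mulmx A).

End Defs.

(* Main.v *)
Require Import Defs.
From HB Require Import structures.
From mathcomp Require Import all_boot all_order all_algebra.
From mathcomp Require Import complex reals.
From mathcomp Require Import ring.
Import Order.TTheory GRing.Theory Num.Theory.
Local Open Scope ring_scope.
Section IP.
Variable R : realType.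
Local Notation C := R[i].
Variables (K : lmodType C) (ip : K -> K -> C).
Hypothesis hip : is_inner ip.

Lemma ip0l z : ip 0 z = 0.
Proof.
case: hip => lin _ _ _.
have := lin 1 0 0 z; rewrite scaler0 addr0 mul1r => /eqP.
by rewrite -subr_eq0 opprD addrA subrr sub0r oppr_eq0 => /eqP.
Qed.

Lemma ipDl x y z : ip (x + y) z = ip x z + ip y z.
Proof. by case: hip => lin _ _ _; rewrite -[x]scale1r lin mul1r scale1r. Qed.

Lemma ipZl a x z : ip (a *: x) z = a * ip x z.
Proof. by case: hip => lin _ _ _; rewrite -[a *: x]addr0 lin ip0l addr0. Qed.

Lemma ipC x y : ip x y = (ip y x)^*.
Proof. by case: hip. Qed.

Lemma ipDr x y z : ip z (x + y) = ip z x + ip z y.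
Proof. by rewrite !(ipC z) ipDl rmorphD. Qed.

Lemma ipZr a x z : ip z (a *: x) = a^* * ip z x.
Proof. by rewrite !(ipC z) ipZl rmorphM. Qed.

Lemma ipNl x z : ip (- x) z = - ip x z.
Proof. by rewrite -scaleN1r ipZl mulN1r. Qed.

Lemma ipNr x z : ip z (- x) = - ip z x.
Proof. by rewrite -scaleN1r ipZr rmorphN rmorph1 mulN1r. Qed.

Lemma ipBl x y z : ip (x - y) z = ip x z - ip y z.
Proof. by rewrite ipDl ipNl. Qed.

Lemma ipBr x y z : ip z (x - y) = ip z x - ip z y.
Proof. by rewrite ipDr ipNr. Qed.

End IP.
Arguments ip0l {R K ip} hip.
Arguments ipDl {R K ip} hip.
Arguments ipZl {R K ip} hip.
Arguments ipC {R K ip} hip.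
Arguments ipDr {R K ip} hip.
Arguments ipZr {R K ip} hip.
Arguments ipNl {R K ip} hip.
Arguments ipNr {R K ip} hip.
Arguments ipBl {R K ip} hip.
Arguments ipBr {R K ip} hip.

Section UL.
Variable R : realType.
Local Notation C := R[i].
Variables (K : lmodType C) (ip : K -> K -> C) (U : K -> K).
Hypothesis hU : unitary ip U.

Lemma U0 : U 0 = 0.
Proof.
case: hU => lin _ _.
have := lin 1 0 0; rewrite scaler0 addr0 scale1r => /eqP.
by rewrite -subr_eq0 opprD addrA subrr sub0r oppr_eq0 => /eqP.
Qed.

Lemma UD x y : U (x + y) = U x + U y.
Proof. by case: hU => lin _ _; rewrite -[x]scale1r lin !scale1r. Qed.

Lemma UZ a x : U (a *: x) = a *: U x.
Proof. by case: hU => lin _ _; rewrite -[a *: x]addr0 lin U0 addr0. Qed.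

Lemma UN x : U (- x) = - U x.
Proof. by rewrite -scaleN1r UZ scaleN1r. Qed.

Lemma UB x y : U (x - y) = U x - U y.
Proof. by rewrite UD UN. Qed.

End UL.
Arguments U0 {R K ip U} hU.
Arguments UD {R K ip U} hU.
Arguments UZ {R K ip U} hU.
Arguments UN {R K ip U} hU.
Arguments UB {R K ip U} hU.

Section Main.
Variable R : realType.
Local Notation C := R[i].

Definition A2 : 'M[C]_2 := \matrix_(i, j) ((i == ord0) && (j == ord_max))%:R.
Definition c2 (j : 'I_2) : C := if j == ord0 then 1 else -1.
Definition hh : C := 2^-1.
Definition tt : C := sqrtC hh.
Definition z0 : C := 2 * tt.

Lemma hh_ge0 : 0 <= hh. Proof. by rewrite /hh invr_ge0 ler0n. Qed.
Lemma hhc : hh^* = hh. Proof. exact: geC0_conj hh_ge0. Qed.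
Lemma ttc : tt^* = tt. Proof. by apply: geC0_conj; rewrite sqrtC_ge0 hh_ge0. Qed.
Lemma tt2 : tt * tt = hh. Proof. by rewrite -expr2 sqrtCK. Qed.
Lemma hh2 : hh + hh = 1. Proof. by rewrite /hh; field. Qed.

Lemma sum2 (F : 'I_2 -> C) : \sum_(i < 2) F i = F ord0 + F ord_max.
Proof. by rewrite big_ord_recr big_ord1 /=; congr (F _ + _); apply/val_inj. Qed.

Lemma ord2P (i : 'I_2) : i = ord0 \/ i = ord_max.
Proof. by case: i => [[|[|//]] ?]; [left|right]; apply/val_inj. Qed.

Lemma forced (K : lmodType C) (ip : K -> K -> C) (v : 'I_2 -> K) (U : K -> K) :
  is_hilbert ip -> unitary_dilation ip v U A2 -> Wc ip c2 U z0.
Proof.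
move=> [hip _] [hv hU hA].
have [_ iso surj] := hU.
have [_ _ _ def] := hip.
set v0 := v ord0; set v1 := v ord_max.
have v00 : ip v0 v0 = 1 by rewrite hv eqxx.
have v11 : ip v1 v1 = 1 by rewrite hv eqxx.
have v01 : ip v0 v1 = 0 by rewrite hv.
have v10 : ip v1 v0 = 0 by rewrite hv.
have a10 : ip (U v1) v0 = 1 by rewrite hA mxE eqxx.
have a01 : ip (U v0) v1 = 0 by rewrite hA mxE.
have a11 : ip (U v1) v1 = 0 by rewrite hA mxE.
have Uv1 : U v1 = v0.
  apply/eqP; rewrite -subr_eq0; apply/eqP/def.
  rewrite (ipBl hip) !(ipBr hip) iso v11 a10 v00 (ipC hip v0) a10.
  by rewrite rmorph1 !subrr.
have [x0 Ux0] := surj v1.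
have x00 : ip x0 x0 = 1 by rewrite -iso Ux0.
have x01 : ip x0 v1 = 0 by rewrite -iso Ux0 Uv1.
have x0v0 : ip x0 v0 = 0 by rewrite -iso Ux0 (ipC hip) a01 rmorph0.
have v1x0 : ip v1 x0 = 0 by rewrite (ipC hip) x01 rmorph0.
have v0x0 : ip v0 x0 = 0 by rewrite (ipC hip) x0v0 rmorph0.
pose a := hh *: (x0 + v0); pose b := tt *: v1.
exists (fun j => if j == ord0 then a + b else a - b); split.
  move=> i j; case: (ord2P i) => ->; case: (ord2P j) => -> /=;
  rewrite /a /b ?(ipDl hip, ipBl hip, ipDr hip, ipBr hip, ipZl hip, ipZr hip, ipNl hip, ipNr hip);
  rewrite ?(v00, v11, v01, v10, x00, x01, x0v0, v1x0, v0x0) ?hhc ?ttc /=.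
  all: try ring: tt2 hh2.
rewrite sum2 /c2 eqxx /= /a /b.
rewrite ?(UD hU, UB hU, UZ hU, UN hU) Ux0 Uv1.
rewrite ?(ipDl hip, ipBl hip, ipDr hip, ipBr hip, ipZl hip, ipZr hip, ipNl hip, ipNr hip).
rewrite ?(v00, v11, v01, v10, x00, x01, x0v0, v1x0, v0x0, a01) ?hhc ?ttc /=.
rewrite /z0.
set q := ip (U v0) x0 + ip (U v0) v0.
have e : 2 * tt = 2 * (tt * (hh + hh)) by rewrite hh2 mulr1.
rewrite e; ring.
Qed.

Lemma Amx (x : 'cV[C]_2) :
  (A2 *m x) ord0 0 = x ord_max 0 /\ (A2 *m x) ord_max 0 = 0.
Proof. by rewrite !mxE !sum2 !mxE /=; split; ring. Qed.

Lemma dotcE (x y : 'cV[C]_2) :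
  dotc x y = x ord0 0 * (y ord0 0)^* + x ord_max 0 * (y ord_max 0)^*.
Proof. by rewrite /dotc sum2. Qed.

Lemma dotcA (x : 'cV[C]_2) : dotc (A2 *m x) x = x ord_max 0 * (x ord0 0)^*.
Proof. by have [h0 h1] := Amx x; rewrite dotcE h0 h1 mul0r addr0. Qed.

Lemma contrA : contraction A2.
Proof.
move=> x; rewrite !dotcE; have [-> ->] := Amx x.
by rewrite mul0r addr0 lerDr mul_conjC_ge0.
Qed.

Lemma incl (K : lmodType C) (ip : K -> K -> C) (v : 'I_2 -> K) (U : K -> K) w :
  is_hilbert ip -> unitary_dilation ip v U A2 -> Wc_mx A2 c2 w -> Wc ip c2 U w.
Proof.
move=> [hip _] [hv hU hA] [e [he ->]].
set v0 := v ord0; set v1 := v ord_max.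
have v00 : ip v0 v0 = 1 by rewrite hv eqxx.
have v11 : ip v1 v1 = 1 by rewrite hv eqxx.
have v01 : ip v0 v1 = 0 by rewrite hv.
have v10 : ip v1 v0 = 0 by rewrite hv.
have a10 : ip (U v1) v0 = 1 by rewrite hA mxE eqxx.
have a01 : ip (U v0) v1 = 0 by rewrite hA mxE.
have a11 : ip (U v1) v1 = 0 by rewrite hA mxE.
have a00 : ip (U v0) v0 = 0 by rewrite hA mxE.
pose phi (x : 'cV[C]_2) := x ord0 0 *: v0 + x ord_max 0 *: v1.
exists (fun j => phi (e j)); split.
  move=> i j; rewrite -he dotcE /phi.
  rewrite ?(ipDl hip, ipDr hip, ipZl hip, ipZr hip) v00 v11 v01 v10.
  ring.
apply: eq_bigr => j _; congr (_ * _); rewrite dotcA /phi.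
rewrite ?(UD hU, UZ hU).
rewrite ?(ipDl hip, ipDr hip, ipZl hip, ipZr hip) a00 a01 a10 a11.
ring.
Qed.

Lemma amgm (a b : C) : 2 * (`|a| * `|b|) <= `|a| ^+ 2 + `|b| ^+ 2.
Proof.
rewrite -subr_ge0.
have -> : `|a| ^+ 2 + `|b| ^+ 2 - 2 * (`|a| * `|b|) = (`|a| - `|b|) ^+ 2 by ring.
by rewrite -realEsqr realB ?normr_real.
Qed.

Lemma half_bound (x : 'cV[C]_2) : dotc x x = 1 ->
  `|dotc (A2 *m x) x| <= hh.
Proof.
rewrite dotcE dotcA => h.
have := amgm (x ord_max 0) (x ord0 0).
rewrite !normCK addrC h normrM norm_conjC.
move=> H; rewrite /hh.
have H2 : `|x ord_max 0| * `|x ord0 0| = 2^-1 * (2 * (`|x ord_max 0| * `|x ord0 0|)).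
  by field.
rewrite H2 -[X in _ <= X]mulr1; apply: ler_wpM2l => //.
by rewrite invr_ge0 ler0n.
Qed.

Lemma Wbound w : Wc_mx A2 c2 w -> `|w| <= 1.
Proof.
move=> [e [he ->]]; rewrite sum2 /c2 eqxx /= mul1r mulN1r.
apply: le_trans (ler_normB _ _) _.
rewrite -hh2 lerD // half_bound // he eqxx //.
Qed.

Lemma z0_gt1 : 1 < z0.
Proof.
have z0ge : 0 <= z0 by rewrite /z0 mulr_ge0 ?ler0n // sqrtC_ge0 hh_ge0.
rewrite -(ltr_pXn2r (n:=2)) // ?nnegrE ?ler01 //.
have -> : z0 ^+ 2 = 2 by rewrite /z0 exprMn sqrtCK /hh; field.
by rewrite expr1n ltr1n.
Qed.

Lemma notcl : ~ cclosure (Wc_mx A2 c2) z0.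
Proof.
move=> hcl.
have pos : 0 < z0 - 1 by rewrite subr_gt0 z0_gt1.
have [w [Ww hw]] := hcl (z0 - 1) pos.
have bw := Wbound _ Ww.
have : `|z0| <= `|z0 - w| + `|w|.
  by rewrite -[X in `|X| <= _](subrK w) ler_normD.
rewrite ger0_norm; last by apply: ltW; apply: lt_trans z0_gt1.
move=> H.
have : z0 < z0.
  apply: (le_lt_trans H).
  by rewrite -[X in _ < X](subrK 1) ltr_leD.
by rewrite ltxx.
Qed.

End Main.

Theorem theorem1p4 (R : realType) :
  exists (n : nat) (A : 'M[R[i]]_n) (c : 'I_n -> R[i]),
    contraction A /\
    (forall z, cclosure (Wc_mx A c) z -> dilation_inter A c z) /\
    (exists z, dilation_inter A c z /\ ~ cclosure (Wc_mx A c) z).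
Proof.
exists 2, (A2 R), (@c2 R); split; first exact: contrA.
split.
  move=> z hz K ip v U hH hD eps he.
  have [w [Ww hw]] := hz eps he.
  by exists w; split => //; apply: incl hH hD Ww.
exists (z0 R); split; last exact: notcl.
move=> K ip v U hH hD eps he.
exists (z0 R); split; first exact: forced hH hD.
by rewrite subrr normr0.
Qed.
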